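(* Let $\Gamma$ be a connected highly-regular graph with CAM $C=[c_{i,j}]_{1\le i,j\le m}$ and diameter $D=\operatorname{diam}(\Gamma)$, with chosen partitions $V_1(u)=\{u\},\dots,V_m(u)$ for each vertex $u$, and let $S_0,\dots,S_D$ be nonempty subsets of $\{1,\dots,m\}$ with $D_i(u)=\bigsqcup_{t\in S_i}V_t(u)$ for every vertex $u$ and every $i$. For $i\in\{1,\dots,D\}$ define $b_{i-1}^{\max}=\max\{\sum_{t\in S_i}c_{t,l}: l\in S_{i-1}\}$ and $c_i^{\max}=\max\{\sum_{t\in S_{i-1}}c_{t,l}: l\in S_i\}$. Assume $\Gamma$ satisfies: $(\star)$ for every vertex $u$, every $i\in\{0,1,\dots,D-1\}$ and every $x\in D_i(u)$, the set $D_1(x)\cap D_{i+1}(u)$ is nonempty. Then for all integers $i\ge1$, $j\ge 0$ with $i+j\le D$, we have $c_i^{\max}\le b_j^{\max}$.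
   Context: All graphs are finite, simple; $d(u,v)$ is graph distance and $D_i(u)=\{v:d(u,v)=i\}$. A graph $\Gamma$ of order $n$ is highly-regular with collapsed adjacency matrix (CAM) $C=[c_{i,j}]_{1\le i,j\le m}$, where $2\le m<n$ (the value $m=n$ is allowed only when $n=2$), if for every vertex $u$ there is a partition of $V(\Gamma)$ into nonempty sets $V_1(u)=\{u\},V_2(u),\dots,V_m(u)$ such that for all $i,j$, every vertex $y\in V_j(u)$ is adjacent to exactly $c_{i,j}$ vertices of $V_i(u)$. *)

(* Defs.v *)
From mathcomp Require Import all_boot.
Set Implicit Arguments. Unset Strict Implicit. Unset Printing Implicit Defensive.

Fixpoint walk (T : finType) (e : rel T) (k : nat) (u v : T) : bool :=
  match k with
  | 0 => u == v
  | k'.+1 => [exists w, e u w && walk e k' w v]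
  end.

(* Distance sphere D_i(u) = { v : d(u,v) = i }:
   v is reachable by a walk of length i but by no shorter walk. *)
Definition sphere (T : finType) (e : rel T) (i : nat) (u : T) : {set T} :=
  [set v | walk e i u v && [forall j : 'I_i, ~~ walk e j u v]].

Definition bmax (m : nat) (C : 'I_m -> 'I_m -> nat) (S : nat -> {set 'I_m})
  (j : nat) : nat :=
  \max_(l in S j) \sum_(t in S j.+1) C t l.

Definition cmax (m : nat) (C : 'I_m -> 'I_m -> nat) (S : nat -> {set 'I_m})
  (i : nat) : nat :=
  \max_(l in S i) \sum_(t in S i.-1) C t l.

(* Main.v *)
Require Import Defs.
From mathcomp Require Import all_boot.
From mathcomp Require Import zify.


Section Aux.
Variables (T : finType) (e : rel T).

Lemma walk_cat a b u v w : walk e a u v -> walk e b v w -> walk e (a + b) u w.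
Proof.
elim: a u => [|a IH] u.
  by move=> /= /eqP ->.
move=> /existsP [x /andP [eux wxv]] hb; rewrite addSn; apply/existsP; exists x.
by rewrite eux /=; apply: IH.
Qed.

Lemma walk1 u v : walk e 1 u v = e u v.
Proof.
apply/existsP/idP => [[x /andP [h /eqP <-]] //| h].
by exists v; rewrite h eqxx.
Qed.

Lemma walk_sym (es : symmetric e) k u v : walk e k u v -> walk e k v u.
Proof.
elim: k u => [|k IH] u.
  by rewrite /= eq_sym.
move=> /existsP [x /andP [eux wxv]]; rewrite -addn1.
by apply: walk_cat (IH _ wxv) _; rewrite walk1 es.
Qed.

Lemma sphereP i u v : reflect (walk e i u v /\ forall k, k < i -> ~~ walk e k u v)
  (v \in sphere e i u).
Proof.
rewrite inE; apply: (iffP andP) => [[h /forallP f]|[h f]]; split => //.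
  by move=> k ki; exact: (f (Ordinal ki)).
by apply/forallP => k; apply: f.
Qed.

End Aux.
Arguments walk_cat {T e a b u v w}.
Arguments walk1 {T e}.
Arguments walk_sym {T e}.
Arguments sphereP {T e i u v}.

Theorem proposition6p2
  (T : finType) (e : rel T)
  (e_sym : symmetric e) (e_irr : irreflexive e)
  (m : nat) (V : T -> 'I_m -> {set T}) (C : 'I_m -> 'I_m -> nat)
  (* highly-regular with CAM C, partitions V_1(u) = {u}, ..., V_m(u)
     (index t : 'I_m corresponds to t+1 in the paper) *)
  (m_ge2 : 2 <= m)
  (m_lt : m < #|T| \/ (m = #|T| /\ #|T| = 2))
  (V_first : forall (u : T) (t : 'I_m), val t = 0 -> V u t = [set u])
  (V_nonempty : forall u t, V u t != set0)
  (V_cover : forall u x, exists t, x \in V u t)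
  (V_disj : forall u t t' x, x \in V u t -> x \in V u t' -> t = t')
  (V_cam : forall u (i j : 'I_m) y, y \in V u j ->
             #|[set x in V u i | e x y]| = C i j)
  (* diameter D (this also encodes connectedness) *)
  (D : nat)
  (D_bound : forall u v, exists2 i, i <= D & v \in sphere e i u)
  (D_attained : exists u v, v \in sphere e D u)
  (* the sets S_0, ..., S_D *)
  (S : nat -> {set 'I_m})
  (S_nonempty : forall i, i <= D -> S i != set0)
  (S_sphere : forall i u, i <= D ->
                sphere e i u = \bigcup_(t in S i) V u t)
  (* condition (star) *)
  (star : forall u i x, i < D -> x \in sphere e i u ->
            exists y, y \in sphere e 1 x :&: sphere e i.+1 u) :
  forall i j : nat, 1 <= i -> i + j <= D -> cmax C S i <= bmax C S j.
Proof.
move=> i j i_ge1 ijD.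
have ws := walk_sym e_sym.

have count : forall v w l k, k <= D -> w \in V v l ->
    #|[set x in sphere e k v | e x w]| = \sum_(t in S k) C t l.
  move=> v w l k kD wl; rewrite S_sphere //.
  set A := S k.
  pose cls x := odflt l [pick t | x \in V v t].
  have clsP : forall x, x \in V v (cls x).
    move=> x; rewrite /cls; case: pickP => [t //|/= h].
    by have [t xt] := V_cover v x; move: (h t); rewrite xt.
  have clsE : forall x t, x \in V v t -> cls x = t.
    by move=> x t xt; apply: V_disj (clsP x) xt.
  rewrite -sum1_card (partition_big cls (mem A)); last first.
    move=> x; rewrite inE => /andP [/bigcupP [t tA xt] _].
    by rewrite (clsE _ _ xt).
  apply: eq_bigr => t tA; rewrite -(V_cam _ t _ _ wl) -sum1_card.
  apply: eq_bigl => x; rewrite !inE.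
  apply/idP/idP.
    move=> /andP [/andP [_ ->] /eqP <-]; by rewrite clsP.
  move=> /andP [xt ->]; rewrite (clsE _ _ xt) eqxx andbT andbT.
  by apply/bigcupP; exists t.
apply/bigmax_leqP => l li.
have [v0 _] : exists v0 : T, True.
  by have [u [v _]] := D_attained; exists u.
have [w wl] := set0Pn _ (V_nonempty v0 l).
have iD : i <= D by apply: leq_trans ijD; apply: leq_addr.
have wi : w \in sphere e i v0 by rewrite S_sphere //; apply/bigcupP; exists l.
have far : forall k, k <= j -> exists2 u, u \in sphere e (i + k) v0 & walk e k w u.
  elim=> [|k IH] kj.
    by exists w; [rewrite addn0 | rewrite /= eqxx].
  have [u ui wu] := IH (ltnW kj).
  have [y /setIP [y1 y2]] : exists y, y \in sphere e 1 u :&: sphere e (i + k).+1 v0.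
    apply: (star v0 (i + k) u _ ui); apply: leq_trans ijD; by rewrite ltn_add2l.
  exists y; first by rewrite addnS.
  rewrite -addn1; apply: walk_cat wu _.
  by by move: y1 => /sphereP [? _].
have [u ufar wu] := far j (leqnn j).
have /sphereP [vu vumin] := ufar.
have /sphereP [vw _] := wi.
have wj : w \in sphere e j u.
  apply/sphereP; split; first exact: ws.
  move=> k kj; apply/negP => uw.
  have := vumin (i + k); rewrite ltn_add2l kj => /(_ isT) /negP; apply.
  exact: walk_cat vw (ws _ _ _ uw).
have jD : j.+1 <= D by apply: leq_trans ijD; rewrite addnC -addn1 leq_add2l.
have [l' l'S wl'] : exists2 l', l' \in S j & w \in V u l'.
  by apply/bigcupP; rewrite -S_sphere // ltnW.
apply: leq_trans (leq_bigmax_cond _ l'S).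
rewrite -(count _ _ _ _ (leq_trans (leq_pred i) iD) wl) -(count _ _ _ _ jD wl').
apply: subset_leq_card; apply/subsetP => z /setIdP [zi ezw].
apply/setIdP; split => //.
have /sphereP [vz vzmin] := zi.
apply/sphereP; split.
  rewrite -addn1; apply: walk_cat (ws _ _ _ wu) _.
  by rewrite walk1 e_sym.
move=> k kj; apply/negP => uz.
have := vumin (i.-1 + k).
have h : i.-1 + k < i + j by clear -kj i_ge1; lia.
move=> /(_ h) /negP; apply.
exact: walk_cat vz (ws _ _ _ uz).
Qed.
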